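(* Let $p$ be a prime and $X$ a countable set. For every $A\in\mathcal{B}(\mathbb{Q}_p(X))$ we have $\|A\|=\max\{|A_{ij}|_p: i,j\in X\}$ (in particular the maximum exists).
   Context: $\mathbb{Q}_p(X)$ is the set of maps $\xi:X\to\mathbb{Q}_p$ with $|\xi(i)|_p\le1$ for all but finitely many $i$, a $\mathbb{Z}_p$-module under coordinatewise operations, with the topology $\tau$ in which $A\subseteq\mathbb{Q}_p(X)$ is open iff for every finite $P\subseteq X$ the set $A\cap\big(\prod_{i\in P}\mathbb{Q}_p\times\prod_{j\in X\setminus P}\mathbb{Z}_p\big)$ is open in the product topology. $\mathcal{B}(\mathbb{Q}_p(X))$ is the set of $\tau$-continuous $\mathbb{Z}_p$-linear maps. Norm $\|\xi\|=\max_i|\xi(i)|_p$, operator norm $\|A\|=\sup_{\|\xi\|\le1}\|A\xi\|$. Matrix entries: $A_{ij}=(A\delta_j)(i)$, where $\delta_j(j)=1$ and $\delta_j(y)=0$ for $y\ne j$. *)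

(* Defs.v *)
From HB Require Import structures.
From mathcomp Require Import all_boot all_order all_algebra.
From mathcomp Require Import all_classical all_reals ereal.
Import Order.TTheory GRing.Theory Num.Theory.
Local Open Scope classical_set_scope.
Local Open Scope ring_scope.

(* The p-adic numbers Q_p, represented as the inverse limit                *)
(*   Q_p = lim_n Z[1/p] / p^n Z.                                           *)
(* An element x of Q_p is a sequence x : nat -> rat where x n is the       *)
(* canonical representative in [0, p^n) of x mod p^n Z_p                   *)
(* (a rational whose denominator is a power of p), and the sequence is     *)
(* compatible: x n = x (n+1) mod p^n.  This representation is canonical,  *)
(* so equality of p-adic numbers is equality of sequences.                 *)

Definition ratmod (r q : rat) : rat := r - q * (Num.floor (r / q))%:~R.

Definition ppow (p n : nat) : rat := (p%:R) ^+ n.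

Definition qp (p : nat) := nat -> rat.

Definition isQp (p : nat) (x : qp p) : Prop :=
  forall n : nat,
    p.-nat `|denq (x n)|%N /\ 0 <= x n /\ x n < ppow p n /\
    x n = ratmod (x n.+1) (ppow p n).

Definition qp_dexp (p : nat) (x : qp p) : nat := logn p `|denq (x 0%N)|%N.

Definition qp_zero (p : nat) : qp p := fun _ => 0.
Definition qp_one (p : nat) : qp p := fun n => ratmod 1 (ppow p n).
Definition qp_add (p : nat) (x y : qp p) : qp p :=
  fun n => ratmod (x n + y n) (ppow p n).
Definition qp_opp (p : nat) (x : qp p) : qp p :=
  fun n => ratmod (- x n) (ppow p n).
(* product: (xy) mod p^n is computed from x mod p^(n+l), y mod p^(n+k),
   where p^k, p^l are the denominators of x, y. *)
Definition qp_mul (p : nat) (x y : qp p) : qp p :=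
  fun n => ratmod (x (n + qp_dexp p y)%N * y (n + qp_dexp p x)%N) (ppow p n).

Definition in_pnZp (p : nat) (x : qp p) (n : int) : Prop :=
  if (0 <= n) then x `|n|%N = 0
  else (ppow p `|n|%N * x 0%N) \is a Num.int.

(* p-adic absolute value |x|_p = p^(-v(x)),  v(x) = sup {n | x \in p^n Z_p}
   (so |0|_p = 0). *)
Definition padic_abs (R : realType) (p : nat) (x : qp p) : R :=
  inf [set (p%:R : R) ^ (- n) | n in [set n : int | in_pnZp p x n]].

Definition isZp (R : realType) (p : nat) (x : qp p) : Prop :=
  isQp p x /\ padic_abs R p x <= 1.

Definition QpX (R : realType) (p : nat) (X : Type) : set (X -> qp p) :=
  [set xi | (forall i, isQp p (xi i)) /\
            finite_set [set i | 1 < padic_abs R p (xi i)]].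

Definition vadd (p : nat) (X : Type) (xi eta : X -> qp p) : X -> qp p :=
  fun i => qp_add p (xi i) (eta i).
Definition vscale (p : nat) (X : Type) (a : qp p) (xi : X -> qp p) : X -> qp p :=
  fun i => qp_mul p a (xi i).

Definition slab (R : realType) (p : nat) (X : Type) (P : set X) : set (X -> qp p) :=
  [set xi | (forall i, isQp p (xi i)) /\ (forall j, ~ P j -> padic_abs R p (xi j) <= 1)].

(* U (a subset of S_P) is open in the product topology of S_P: around each
   point it contains a basic open set (finitely many coordinates within
   distance e). *)
Definition prod_open (R : realType) (p : nat) (X : Type) (P : set X)
    (U : set (X -> qp p)) : Prop :=
  forall xi, U xi -> exists F : set X, finite_set F /\
    exists e : R, 0 < e /\
      forall eta, slab R p X P eta ->
        (forall i, F i -> padic_abs R p (qp_add p (eta i) (qp_opp p (xi i))) < e) ->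
        U eta.

Definition tau_open (R : realType) (p : nat) (X : Type) (A : set (X -> qp p)) : Prop :=
  A `<=` QpX R p X /\
  forall P : set X, finite_set P -> prod_open R p X P (A `&` slab R p X P).

(* B(Q_p(X)): tau-continuous Z_p-linear maps Q_p(X) -> Q_p(X).  A map is
   given as a function on X -> qp p; only its values on Q_p(X) matter. *)
Definition isB (R : realType) (p : nat) (X : Type)
    (A : (X -> qp p) -> (X -> qp p)) : Prop :=
  [/\ (forall xi, QpX R p X xi -> QpX R p X (A xi)),
      (forall xi eta, QpX R p X xi -> QpX R p X eta ->
         A (vadd p X xi eta) = vadd p X (A xi) (A eta)),
      (forall a xi, isZp R p a -> QpX R p X xi -> A (vscale p X a xi) = vscale p X a (A xi)) &
      (forall B, tau_open R p X B -> tau_open R p X (QpX R p X `&` (A @^-1` B)))].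

Definition vnorm (R : realType) (p : nat) (X : Type) (xi : X -> qp p) : R :=
  sup (range (fun i => padic_abs R p (xi i))).

Definition opnorm (R : realType) (p : nat) (X : Type)
    (A : (X -> qp p) -> (X -> qp p)) : \bar R :=
  ereal_sup [set (vnorm R p X (A xi))%:E | xi in [set xi | QpX R p X xi /\ vnorm R p X xi <= 1]].

Definition delta (p : nat) (X : eqType) (j : X) : X -> qp p :=
  fun y => if y == j then qp_one p else qp_zero p.

Definition mxentry (p : nat) (X : eqType) (A : (X -> qp p) -> (X -> qp p))
    (i j : X) : qp p := A (delta p X j) i.

(* Main.v *)
Require Import Defs.
From HB Require Import structures.
From mathcomp Require Import all_boot all_order all_algebra.
From mathcomp Require Import all_classical all_reals ereal.
From mathcomp Require Import ring lra zify.
Import Order.TTheory GRing.Theory Num.Theory.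
Local Open Scope classical_set_scope.
Local Open Scope ring_scope.
Definition cong (q r s : rat) : Prop := ((r - s) / q) \is a Num.int.

Lemma ratmod_sub (r q : rat) : q != 0 -> cong q r (ratmod r q).
Proof.
move=> q0; rewrite /cong /ratmod opprB addrC subrK mulrC mulKf //.
Qed.

Lemma cong_sym q r s : cong q r s -> cong q s r.
Proof. by rewrite /cong => h; rewrite -opprB mulNr rpredN. Qed.

Lemma cong_trans q r s t : cong q r s -> cong q s t -> cong q r t.
Proof.
rewrite /cong => h1 h2.
have -> : (r - t) / q = (r - s) / q + (s - t) / q by rewrite -mulrDl addrA subrK.
exact: rpredD.
Qed.

Lemma cong_refl q r : cong q r r.
Proof. by rewrite /cong subrr mul0r. Qed.

Lemma ratmod_cong (q r s : rat) : 0 < q -> cong q r s -> ratmod r q = ratmod s q.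
Proof.
move=> q0 h; rewrite /ratmod.
have -> : r / q = s / q + (r - s) / q by rewrite -mulrDl addrC subrK.
rewrite floorDrz // rmorphD /= mulrDr.
have -> : q * ((Num.floor ((r - s) / q))%:~R) = r - s.
  by rewrite floorK // mulrC mulfVK // gt_eqF.
by ring.
Qed.

Lemma ratmod_bounds (r q : rat) : 0 < q -> 0 <= ratmod r q < q.
Proof.
move=> q0; rewrite /ratmod.
have /andP[h1 h2] := floor_itv (r / q).
rewrite rmorphD /= rmorph1 in h2.
set f := (Num.floor (r / q))%:~R in h1 h2 *.
have e : r = q * (r / q) by rewrite mulrC mulfVK // gt_eqF.
have a1 : q * f <= q * (r / q) by rewrite ler_pM2l.
have a2 : q * (r / q) < q * (f + 1) by rewrite ltr_pM2l.
rewrite -e in a1 a2; apply/andP; split; first by lra.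
rewrite mulrDr mulr1 in a2; lra.
Qed.
Lemma ratmod_id (r q : rat) : 0 <= r < q -> ratmod r q = r.
Proof.
move=> /andP[r0 rq]; have q0 : 0 < q by apply: le_lt_trans rq.
rewrite /ratmod (_ : Num.floor (r / q) = 0) ?mulr0 ?subr0 //.
apply: floor_def; rewrite add0r /= mulr0z rmorph1.
apply/andP; split; first by rewrite divr_ge0 // ltW.
by rewrite ltr_pdivrMr // mul1r.
Qed.

Lemma ratmod0 q : ratmod 0 q = 0.
Proof. by rewrite /ratmod mul0r floor0 mulr0 subrr. Qed.

Lemma ratmod1 r : ratmod r 1 = r - (Num.floor r)%:~R.
Proof. by rewrite /ratmod divr1 mul1r. Qed.

Lemma ppow_gt0 p n : (0 < p)%N -> 0 < ppow p n.
Proof. by move=> p0; rewrite /ppow exprn_gt0 // ltr0n. Qed.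

Lemma ppowD p m n : ppow p (m + n) = ppow p m * ppow p n.
Proof. by rewrite /ppow exprD. Qed.

Lemma ppow_int p n : ppow p n \is a Num.int.
Proof. by rewrite /ppow rpredX // rpred_nat. Qed.

Lemma ppow0 p : ppow p 0 = 1.
Proof. by []. Qed.

Lemma cong_weak p m l r s : (0 < p)%N -> (m <= l)%N -> cong (ppow p l) r s -> cong (ppow p m) r s.
Proof.
move=> p0 ml; rewrite /cong -(subnKC ml) ppowD => h.
have -> : (r - s) / ppow p m = (r - s) / (ppow p m * ppow p (l - m)) * ppow p (l - m).
  rewrite invfM mulrA mulfVK //; by rewrite gt_eqF // ppow_gt0.
by apply: rpredM => //; exact: ppow_int.
Qed.

Definition pden (p : nat) (r : rat) : Prop := exists k : nat, (ppow p k * r) \is a Num.int.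

Lemma pden_int p r : r \is a Num.int -> pden p r.
Proof. by move=> h; exists 0%N; rewrite ppow0 mul1r. Qed.

Lemma pden_add p r s : pden p r -> pden p s -> pden p (r + s).
Proof.
move=> [k hk] [l hl]; exists (k + l)%N; rewrite ppowD mulrDr.
apply: rpredD.
  by rewrite [ppow p k * _]mulrC -mulrA; apply: rpredM => //; exact: ppow_int.
by rewrite -mulrA; apply: rpredM => //; exact: ppow_int.
Qed.

Lemma pden_opp p r : pden p r -> pden p (- r).
Proof. by move=> [k hk]; exists k; rewrite mulrN rpredN. Qed.

Lemma pden_mul p r s : pden p r -> pden p s -> pden p (r * s).
Proof.
move=> [k hk] [l hl]; exists (k + l)%N; rewrite ppowD.
have -> : ppow p k * ppow p l * (r * s) = (ppow p k * r) * (ppow p l * s) by ring.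
exact: rpredM.
Qed.

Lemma pnat_pden p r : prime p -> p.-nat `|denq r|%N -> pden p r.
Proof.
move=> pp hn; exists (logn p `|denq r|%N).
have e : (`|denq r|%N = p ^ logn p `|denq r|)%N by rewrite -p_part part_pnat_id.
have -> : ppow p (logn p `|denq r|) = (denq r)%:~R.
  by rewrite /ppow -natrX -e natr_absz gtr0_norm ?denq_gt0.
by rewrite mulrC -numqE intr_int.
Qed.
Lemma pden_pnat p r : prime p -> pden p r -> p.-nat `|denq r|%N.
Proof.
move=> pp [k hk].
have hz : ppow p k * r = (Num.floor (ppow p k * r))%:~R by rewrite floorK.
set z := Num.floor _ in hz.
have e : ((p ^ k)%N%:Z * numq r = z * denq r)%R.
  apply/eqP; rewrite -(eqr_int rat) !rmorphM /= numqE -hz.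
  by rewrite /ppow -natrX mulrA.
have hd : (denq r %| (p ^ k)%N%:Z * numq r)%Z by rewrite e dvdz_mull // dvdzz.
rewrite dvdzE abszM /= Gauss_dvdl in hd; last by rewrite coprime_sym coprime_num_den.
apply: pnat_dvd hd _; by rewrite pnatX pnat_id.
Qed.
Lemma ppow_neq0 p n : (0 < p)%N -> ppow p n != 0.
Proof. by move=> p0; rewrite gt_eqF // ppow_gt0. Qed.

Lemma qp_cong p x : (0 < p)%N -> isQp p x ->
  forall m l, (m <= l)%N -> x m = ratmod (x l) (ppow p m).
Proof.
move=> p0 hx m l; elim: l => [|l IH].
  rewrite leqn0 => /eqP ->; have [_ [h1 [h2 _]]] := hx 0%N.
  by rewrite ratmod_id // h1 h2.
rewrite leq_eqVlt => /orP[/eqP ->|].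
  have [_ [h1 [h2 _]]] := hx l.+1; by rewrite ratmod_id // h1 h2.
rewrite ltnS => ml; rewrite (IH ml); apply: ratmod_cong; first exact: ppow_gt0.
have [_ [_ [_ e]]] := hx l.
rewrite e; apply: (@cong_weak p m l) => //; apply: cong_sym; apply: ratmod_sub.
exact: ppow_neq0.
Qed.

Lemma isQp_pden p x n : prime p -> isQp p x -> pden p (x n).
Proof. by move=> pp hx; have [h _] := hx n; exact: pnat_pden. Qed.

Lemma isQp_step p x n : (0 < p)%N -> isQp p x -> cong (ppow p n) (x n) (x n.+1).
Proof.
move=> p0 hx; have [_ [_ [_ e]]] := hx n; rewrite e.
by apply: cong_sym; apply: ratmod_sub; exact: ppow_neq0.
Qed.

Lemma mk_isQp p (f : nat -> rat) : prime p -> (forall n, pden p (f n)) ->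
  (forall n, cong (ppow p n) (f n) (f n.+1)) ->
  isQp p (fun n => ratmod (f n) (ppow p n)).
Proof.
move=> pp hd hc n; have p0 := prime_gt0 pp.
split; last split; last split.
- apply: pden_pnat => //; rewrite /ratmod; apply: pden_add => //.
  apply: pden_opp; apply: pden_mul; first by apply: pden_int; exact: ppow_int.
  by apply: pden_int; exact: intr_int.
- by have /andP[] := ratmod_bounds (f n) (ppow p n) (ppow_gt0 p n p0).
- by have /andP[] := ratmod_bounds (f n) (ppow p n) (ppow_gt0 p n p0).
- apply: ratmod_cong; first exact: ppow_gt0.
  apply: (cong_trans _ _ _ _ (hc n)); apply: (@cong_weak p n n.+1) => //.
  by apply: ratmod_sub; exact: ppow_neq0.
Qed.

Lemma isQp_add p x y : prime p -> isQp p x -> isQp p y -> isQp p (qp_add p x y).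
Proof.
move=> pp hx hy; have p0 := prime_gt0 pp; apply: mk_isQp => // n.
  by apply: pden_add; exact: isQp_pden.
rewrite /cong.
have -> : (x n + y n - (x n.+1 + y n.+1)) / ppow p n =
   (x n - x n.+1) / ppow p n + (y n - y n.+1) / ppow p n by rewrite -mulrDl; congr (_ * _); ring.
by apply: rpredD; apply: isQp_step.
Qed.

Lemma isQp_opp p x : prime p -> isQp p x -> isQp p (qp_opp p x).
Proof.
move=> pp hx; have p0 := prime_gt0 pp; apply: mk_isQp => // n.
  by apply: pden_opp; exact: isQp_pden.
rewrite /cong -opprD mulNr rpredN; exact: isQp_step.
Qed.

Lemma isQp_zero p : (0 < p)%N -> isQp p (qp_zero p).
Proof.
move=> p0 n; rewrite /qp_zero; split; last split; last split.
- by [].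
- by [].
- exact: ppow_gt0.
- by rewrite ratmod0.
Qed.

Lemma ppow_ge1 p n : (0 < p)%N -> 1 <= ppow p n.
Proof. by move=> p0; rewrite /ppow exprn_ege1 // ler1n. Qed.

Lemma qp_one_val p n : (1 < p)%N -> qp_one p n = if n is 0%N then 0 else 1.
Proof.
move=> p1; rewrite /qp_one; case: n => [|n].
  by rewrite ppow0 ratmod1 floor1 subrr.
apply: ratmod_id; rewrite ler01 /= /ppow exprn_egt1 //.
by rewrite ltr1n.
Qed.

Lemma isQp_one p : (1 < p)%N -> isQp p (qp_one p).
Proof.
move=> p1 n; have p0 : (0 < p)%N by apply: ltn_trans p1.
rewrite !qp_one_val //; split; last split; last split.
- by case: n.
- by case: n.
- case: n => [|n]; first by exact: ppow_gt0.
  by rewrite /ppow exprn_egt1 // ltr1n.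
- case: n => [|n]; first by rewrite ppow0 ratmod1 floor1 subrr.
  rewrite ratmod_id //; apply/andP; split => //; by rewrite /ppow exprn_egt1 // ltr1n.
Qed.
Lemma int_ppow_mul p k r : r \is a Num.int -> (ppow p k * r) \is a Num.int.
Proof. by move=> h; apply: rpredM => //; exact: ppow_int. Qed.

Lemma inZ_down p x m n : (0 < p)%N -> isQp p x -> in_pnZp p x m -> n <= m -> in_pnZp p x n.
Proof.
move=> p0 hx; rewrite /in_pnZp.
case: m => m; case: n => n //=.
- rewrite lez_nat => hm nm; by rewrite (qp_cong _ _ p0 hx _ _ nm) hm ratmod0.
- move=> hm _; rewrite (qp_cong _ _ p0 hx _ _ (leq0n m)) hm ratmod0 mulr0; exact: rpred0.
- rewrite !NegzE lerN2 lez_nat ltnS => hm mn.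
  rewrite -(subnKC mn) -addSn ppowD mulrAC; apply: rpredM => //; exact: ppow_int.
Qed.

Lemma inZ_ex p x : prime p -> isQp p x -> exists n, in_pnZp p x n.
Proof.
move=> pp hx; have [k hk] := isQp_pden p x 0 pp hx.
exists (Negz k); rewrite /in_pnZp /=.
by rewrite -addn1 ppowD mulrAC; apply: rpredM => //; exact: ppow_int.
Qed.

Lemma inZ_zero p n : in_pnZp p (qp_zero p) n.
Proof.
rewrite /in_pnZp /qp_zero; case: ifP => // _; rewrite mulr0; exact: rpred0.
Qed.

Lemma inZ_add p a b n : in_pnZp p a n -> in_pnZp p b n -> in_pnZp p (qp_add p a b) n.
Proof.
rewrite /in_pnZp /qp_add; case: ifP => _.
  by move=> -> ->; rewrite addr0 ratmod0.
move=> ha hb; rewrite ppow0 ratmod1 !mulrDr mulrN.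
apply: rpredB; first exact: rpredD.
apply: int_ppow_mul; exact: intr_int.
Qed.

Lemma inZ_sub p a b n : (0 < p)%N -> isQp p a ->
  in_pnZp p (qp_add p a (qp_opp p b)) n -> in_pnZp p b n -> in_pnZp p a n.
Proof.
move=> p0 ha; rewrite /in_pnZp /qp_add /qp_opp; case: ifP => _.
  move=> h hb; rewrite hb oppr0 ratmod0 addr0 in h.
  have [_ [h1 [h2 _]]] := ha `|n|%N.
  by rewrite ratmod_id ?h1 ?h2 in h.
rewrite !ppow0 !ratmod1 => h hb.
set u := ppow p `|n|%N in h hb *.
set f1 := (Num.floor (a 0%N + _))%:~R in h.
set f2 := (Num.floor (- b 0%N))%:~R in h.
have e : forall U A B F1 F2 : rat, U * A = U*(A + (-B - F2) - F1) + U*B + U*F2 + U*F1.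
  by move=> *; ring.
rewrite (e u (a 0%N) (b 0%N) f1 f2).
apply: rpredD; last by apply: int_ppow_mul; exact: intr_int.
apply: rpredD; last by apply: int_ppow_mul; exact: intr_int.
exact: rpredD.
Qed.

Lemma dexp0 p a : a 0%N = 0 -> qp_dexp p a = 0%N.
Proof. by move=> h; rewrite /qp_dexp h (_ : denq 0 = 1) // logn1. Qed.

Lemma inZ_mul p a b n : (0 < p)%N -> isQp p a -> a 0%N = 0 ->
  in_pnZp p b n -> in_pnZp p (qp_mul p a b) n.
Proof.
move=> p0 ha a0; rewrite /in_pnZp /qp_mul (dexp0 p a a0) !addn0; case: ifP => _.
  by move=> ->; rewrite mulr0 ratmod0.
rewrite add0n ppow0 ratmod1 => hb.
set l := qp_dexp p b.
have al : a l \is a Num.int.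
  have := qp_cong _ _ p0 ha _ _ (leq0n l); rewrite a0 ppow0 ratmod1 => /eqP.
  rewrite eq_sym subr_eq0 => /eqP ->; exact: intr_int.
rewrite mulrBr; apply: rpredB; last by apply: int_ppow_mul; exact: intr_int.
rewrite mulrCA; exact: rpredM.
Qed.
Section Abs.
Variable R : realType.

Definition pv (p : nat) (n : int) : R := (p%:R : R) ^ (- n).

Lemma pv_gt0 p n : (0 < p)%N -> 0 < pv p n.
Proof. by move=> p0; rewrite /pv exprz_gt0 // ltr0n. Qed.

Lemma pv_le p n m : (1 < p)%N -> (pv p m <= pv p n) = (n <= m).
Proof. by move=> p1; rewrite /pv ler_eXz2l ?ltr1n // lerN2. Qed.

Lemma pv_lt p n m : (1 < p)%N -> (pv p m < pv p n) = (n < m).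
Proof. by move=> p1; rewrite /pv ltr_eXz2l ?ltr1n // ltrN2. Qed.

Lemma pv0 p : pv p 0 = 1.
Proof. by rewrite /pv oppr0 expr0z. Qed.

Lemma abs_lbound p x : (0 < p)%N ->
  has_lbound [set (p%:R : R) ^ (- n) | n in [set n : int | in_pnZp p x n]].
Proof.
move=> p0; exists 0 => y [n _ <-]; apply: ltW; exact: (pv_gt0 p n p0).
Qed.

Lemma abs_le p x n : (0 < p)%N -> in_pnZp p x n -> padic_abs R p x <= pv p n.
Proof.
move=> p0 h; rewrite /padic_abs; apply: (ge_inf (abs_lbound p x p0)).
by exists n.
Qed.

Lemma abs_nonempty p x : prime p -> isQp p x ->
  [set (p%:R : R) ^ (- n) | n in [set n : int | in_pnZp p x n]] !=set0.
Proof.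
move=> pp hx; have [n hn] := inZ_ex p x pp hx.
by exists (pv p n); exists n.
Qed.

Lemma abs_ge0 p x : prime p -> isQp p x -> 0 <= padic_abs R p x.
Proof.
move=> pp hx; rewrite /padic_abs; apply: lb_le_inf; first exact: abs_nonempty.
move=> y [n _ <-]; apply: ltW; exact: (pv_gt0 p n (prime_gt0 pp)).
Qed.

Lemma abs_leP p x n : prime p -> isQp p x -> padic_abs R p x <= pv p n -> in_pnZp p x n.
Proof.
move=> pp hx hle; have p1 := prime_gt1 pp; have p0 := prime_gt0 pp.
apply: contrapT => hn.
have lb : pv p (n - 1) <= padic_abs R p x.
  rewrite /padic_abs; apply: lb_le_inf; first exact: abs_nonempty.
  move=> y [m hm <-]; rewrite -/(pv p m) pv_le //.
  have : m < n.
    rewrite ltNge; apply/negP => nm; apply: hn; exact: (inZ_down _ _ _ _ p0 hx hm nm).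
  move=> mn; lia.
have := le_trans lb hle; rewrite pv_le // => h.
lia.
Qed.

Lemma abs_mono p x y : prime p -> isQp p x ->
  (forall n, in_pnZp p x n -> in_pnZp p y n) -> padic_abs R p y <= padic_abs R p x.
Proof.
move=> pp hx h; rewrite [X in _ <= X]/padic_abs; apply: lb_le_inf; first exact: abs_nonempty.
move=> z [n hn <-]; apply: abs_le; [exact: prime_gt0 | exact: h].
Qed.

End Abs.
Lemma qp_add0r p a : isQp p a -> qp_add p (qp_zero p) a = a.
Proof.
move=> ha; apply: funext => n; rewrite /qp_add /qp_zero add0r.
by have [_ [h1 [h2 _]]] := ha n; rewrite ratmod_id // h1 h2.
Qed.

Lemma qp_addr0 p a : isQp p a -> qp_add p a (qp_zero p) = a.
Proof.
move=> ha; apply: funext => n; rewrite /qp_add /qp_zero addr0.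
by have [_ [h1 [h2 _]]] := ha n; rewrite ratmod_id // h1 h2.
Qed.

Lemma qp_opp0 p : qp_opp p (qp_zero p) = qp_zero p.
Proof. by apply: funext => n; rewrite /qp_opp /qp_zero oppr0 ratmod0. Qed.

Lemma qp_mul0 p b : qp_mul p (qp_zero p) b = qp_zero p.
Proof. by apply: funext => n; rewrite /qp_mul /qp_zero mul0r ratmod0. Qed.

Lemma qp_mulr0 p a : qp_mul p a (qp_zero p) = qp_zero p.
Proof. by apply: funext => n; rewrite /qp_mul /qp_zero mulr0 ratmod0. Qed.

Lemma qp_mul_one p a : (1 < p)%N -> isQp p a -> a 0%N = 0 -> qp_mul p a (qp_one p) = a.
Proof.
move=> p1 ha a0; apply: funext => n.
have d1 : qp_dexp p (qp_one p) = 0%N by apply: dexp0; rewrite qp_one_val.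
rewrite /qp_mul d1 (dexp0 p a a0) !addn0 qp_one_val //.
case: n => [|n]; first by rewrite mulr0 ratmod0 a0.
by rewrite mulr1; have [_ [h1 [h2 _]]] := ha n.+1; rewrite ratmod_id // h1 h2.
Qed.

Lemma Zp0 p a : in_pnZp p a 0 -> a 0%N = 0.
Proof. by []. Qed.

Lemma exists_small (R : realType) p (e : R) : (1 < p)%N -> 0 < e -> exists k : nat, pv R p k < e.
Proof.
move=> p1 e0; exists (Num.truncn (e^-1)).+1.
set k := (Num.truncn _).+1.
have h1 : e^-1 < k%:R by exact: truncnS_gt.
have h2 : (k%:R : R) <= (p%:R) ^+ k.
  rewrite -natrX ler_nat; apply: ltnW; exact: ltn_expl.
have h3 : e^-1 < (p%:R) ^+ k by exact: lt_le_trans h1 h2.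
rewrite /pv -invr_expz /=.
have pk0 : 0 < (p%:R : R) ^+ k by rewrite exprn_gt0 // ltr0n; apply: ltn_trans p1.
rewrite -[e]invrK ltf_pV2 ?posrE ?invr_gt0 //.
Qed.
Lemma argmax_seq (R : realType) (T : eqType) (L : seq T) (f : T -> R) x :
  x \in L -> exists2 y, y \in L & forall z, z \in L -> f z <= f y.
Proof.
elim: L x => [//|a L IH] x _.
case: L IH => [|b L'] IH.
  exists a; first by rewrite mem_seq1.
  by move=> z; rewrite mem_seq1 => /eqP ->.
have [y yL hy] := IH b (mem_head b L').
have [le_ay|lt_ya] := leP (f a) (f y).
  exists y; first by rewrite in_cons yL orbT.
  move=> z; rewrite in_cons => /orP[/eqP ->|zL]; first exact: le_ay.
  exact: hy.
exists a; first exact: mem_head.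
move=> z; rewrite in_cons => /orP[/eqP ->|zL]; first exact: lexx.
exact: (le_trans (hy z zL) (ltW lt_ya)).
Qed.

Lemma ub_seq (R : realType) (T : eqType) (r : seq T) (f : T -> R) :
  exists M, forall y, y \in r -> f y <= M.
Proof.
elim: r => [|a r [M hM]]; first by exists 0.
exists (Num.max M (f a)) => y; rewrite in_cons => /orP[/eqP ->|yr].
  by rewrite le_max lexx orbT.
by rewrite le_max hM.
Qed.

Lemma QpX_bounded (R : realType) p (X : countType) xi : QpX R p X xi ->
  has_ubound (range (fun i => padic_abs R p (xi i))).
Proof.
move=> [_ hf].
have [s hs] := (finite_seqP _).1 hf.
have [M hM] := ub_seq R X s (fun i => padic_abs R p (xi i)).
exists (Num.max M 1) => _ [i _ <-].
have [iS|nis] := boolP (i \in s).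
  by rewrite le_max (hM i iS).
rewrite le_max; apply/orP; right.
rewrite leNgt; apply/negP => h.
have : [set i | 1 < padic_abs R p (xi i)] i by [].
by rewrite hs /= (negbTE nis).
Qed.
Section Main.
Variables (R : realType) (p : nat) (X : countType) (x0 : X) (A : (X -> qp p) -> (X -> qp p)).
Hypothesis pp : prime p.
Hypothesis hB : isB R p X A.

Let p0 : (0 < p)%N := prime_gt0 pp.
Let p1 : (1 < p)%N := prime_gt1 pp.

Definition zv : X -> qp p := fun _ => qp_zero p.

Lemma abs_le1 a : in_pnZp p a 0 -> padic_abs R p a <= 1.
Proof. by move=> h; rewrite -(pv0 R p); exact: abs_le. Qed.

Lemma le1_in a : isQp p a -> padic_abs R p a <= 1 -> in_pnZp p a 0.
Proof. by move=> ha h; apply: (abs_leP R) => //; rewrite pv0. Qed.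

Lemma QpX_Zp xi : (forall i, isQp p (xi i)) -> (forall i, in_pnZp p (xi i) 0) -> QpX R p X xi.
Proof.
move=> h1 h2; split => //.
have -> : [set i | 1 < padic_abs R p (xi i)] = set0.
  apply/seteqP; split => i //= h; have := abs_le1 _ (h2 i); lra.
exact: finite_set0.
Qed.

Lemma isZp_of a : isQp p a -> in_pnZp p a 0 -> isZp R p a.
Proof. by move=> h1 h2; split => //; exact: abs_le1. Qed.

Lemma QpX_zv : QpX R p X zv.
Proof. apply: QpX_Zp => i; [exact: isQp_zero | exact: inZ_zero]. Qed.

Lemma A_zv : A zv = zv.
Proof.
case: hB => hQ hadd hsc hcont.
have e1 : vscale p X (qp_zero p) zv = zv by apply: funext => i; rewrite /vscale qp_mul0.
rewrite -{1}e1 hsc //; first by apply: funext => i; rewrite /vscale qp_mul0.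
- by apply: isZp_of; [exact: isQp_zero | exact: inZ_zero].
- exact: QpX_zv.
Qed.
Lemma slab_QpX P eta : finite_set P -> slab R p X P eta -> QpX R p X eta.
Proof.
move=> fP [h1 h2]; split => //.
apply: (sub_finite_set _ fP) => j /= hj.
by apply: contrapT => nP; move: (h2 j nP); rewrite leNgt hj.
Qed.

Lemma slab_zv P : slab R p X P zv.
Proof.
split => [i|j _]; first exact: isQp_zero.
apply: abs_le1; exact: inZ_zero.
Qed.

Lemma diff_in a b n : isQp p a -> isQp p b ->
  padic_abs R p (qp_add p a (qp_opp p b)) < pv R p n -> in_pnZp p b n -> in_pnZp p a n.
Proof.
move=> ha hb h hbn.
have hd : isQp p (qp_add p a (qp_opp p b)) by apply: isQp_add => //; exact: isQp_opp.
apply: (inZ_sub p a b n p0 ha _ hbn).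
exact: (abs_leP R p _ n pp hd (ltW h)).
Qed.

Definition Bn i n := [set eta | QpX R p X eta /\ in_pnZp p (eta i) n].

Lemma Bn_open i n : tau_open R p X (Bn i n).
Proof.
split; first by move=> eta [].
move=> P fP eta0 [[[q0 _] h0] hs0].
exists [set i]; split; first exact: finite_set1.
exists (pv R p n); split; first exact: pv_gt0.
move=> eta heta hF; have hQ := slab_QpX P eta fP heta.
split; last exact: heta.
split; first exact: hQ.
have [hq _] := heta.
exact: (diff_in (eta i) (eta0 i) n (hq i) (q0 i) (hF i erefl) h0).
Qed.

Definition B0 := [set eta | QpX R p X eta /\ forall i, in_pnZp p (eta i) 0].

Lemma B0_open : tau_open R p X B0.
Proof.
split; first by move=> eta [].
move=> P fP eta0 [[[q0 _] h0] hs0].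
exists P; split; first exact: fP.
exists (pv R p 0); split; first exact: pv_gt0.
move=> eta heta hF; have hQ := slab_QpX P eta fP heta.
split; last exact: heta.
split; first exact: hQ.
move=> j.
have [hq hsl] := heta.
have [Pj|nPj] := pselect (P j).
  exact: (diff_in (eta j) (eta0 j) 0 (hq j) (q0 j) (hF j Pj) (h0 j)).
exact: (le1_in (eta j) (hq j) (hsl j nPj)).
Qed.

Lemma cont0 (B : set (X -> qp p)) : tau_open R p X B -> B zv ->
  exists F : set X, finite_set F /\ exists e : R, 0 < e /\
   forall eta, slab R p X set0 eta ->
     (forall i, F i -> padic_abs R p (eta i) < e) -> QpX R p X eta /\ B (A eta).
Proof.
move=> hBo hz; case: hB => hQ hadd hsc hc.
have [_ ho] := hc B hBo.
have hz' : ((QpX R p X `&` A @^-1` B) `&` slab R p X set0) zv.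
  split; last exact: slab_zv.
  split; first exact: QpX_zv.
  by rewrite /preimage /= A_zv.
have [F [fF [e [e0 he]]]] := ho set0 (finite_set0 X) zv hz'.
exists F; split; first exact: fF.
exists e; split; first exact: e0.
move=> eta hs hF.
have hF' : forall i, F i -> padic_abs R p (qp_add p (eta i) (qp_opp p (zv i))) < e.
  move=> i Fi; rewrite /zv qp_opp0 qp_addr0; first exact: hF.
  by case: hs.
have [[hq hb] _] := he eta hs hF'.
by split.
Qed.

Lemma QpX_delta j : QpX R p X (delta p X j).
Proof.
apply: QpX_Zp => y; rewrite /delta; case: (y == j).
- exact: isQp_one.
- exact: isQp_zero.
- by rewrite /in_pnZp /= qp_one_val.
- exact: inZ_zero.
Qed.

Lemma core xi i n : QpX R p X xi -> (forall j, in_pnZp p (xi j) 0) ->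
  (forall j, in_pnZp p (A (delta p X j) i) n) -> in_pnZp p (A xi i) n.
Proof.
move=> hxi hz hcol.
case: hB => hQ hadd hsc hc.
have [hxq _] := hxi.
have [F [fF [e [e0 he]]]] := cont0 (Bn i n) (Bn_open i n) (conj QpX_zv (inZ_zero p n)).
have [s hs] := (finite_seqP F).1 fF.
pose tr (s : seq X) := fun y => if y \in s then xi y else qp_zero p.
pose rest := fun y => if y \in s then qp_zero p else xi y.
have trQ : forall s', QpX R p X (tr s').
  move=> s'; apply: QpX_Zp => y; rewrite /tr; case: (y \in s').
  - exact: hxq.
  - exact: isQp_zero.
  - exact: hz.
  - exact: inZ_zero.
have restQ : QpX R p X rest.
  apply: QpX_Zp => y; rewrite /rest; case: (y \in s).
  - exact: isQp_zero.
  - exact: hxq.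
  - exact: inZ_zero.
  - exact: hz.
have [k hk] := exists_small R p e p1 e0.
have hrest : in_pnZp p (A rest i) n.
  have hsl : slab R p X set0 rest.
    split => y; first by case: restQ.
    move=> _; rewrite /rest; case: (y \in s).
    - exact: (abs_le1 _ (inZ_zero p 0)).
    - exact: (abs_le1 _ (hz y)).
  have hFr : forall y, F y -> padic_abs R p (rest y) < e.
    move=> y; rewrite hs /= => ys; rewrite /rest ys.
    exact: (le_lt_trans (abs_le R p _ k p0 (inZ_zero p k)) hk).
  have [_ [_ h]] := he rest hsl hFr.
  exact: h.
have htr : forall s', in_pnZp p (A (tr s') i) n.
  elim => [|j s' IH].
    have -> : tr [::] = zv by apply: funext => y; rewrite /tr in_nil.
    rewrite A_zv; exact: inZ_zero.
  have [js|njs] := boolP (j \in s').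
    have -> : tr (j :: s') = tr s'.
      apply: funext => y; rewrite /tr in_cons.
      case: (eqVneq y j) => [->|nyj]; first by rewrite js.
      by [].
    exact: IH.
  pose ej := fun y => if y == j then xi j else qp_zero p.
  have ejQ : QpX R p X ej.
    apply: QpX_Zp => y; rewrite /ej; case: (y == j).
    - exact: hxq.
    - exact: isQp_zero.
    - exact: hz.
    - exact: inZ_zero.
  have hej : ej = vscale p X (xi j) (delta p X j).
    apply: funext => y; rewrite /ej /vscale /delta; case: (y == j).
    - by rewrite (qp_mul_one p (xi j) p1 (hxq j) (Zp0 p (xi j) (hz j))).
    - by rewrite qp_mulr0.
  have -> : tr (j :: s') = vadd p X ej (tr s').
    apply: funext => y; rewrite /vadd /tr /ej in_cons.
    case: (eqVneq y j) => [->|nyj].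
      by rewrite (negbTE njs) /= (qp_addr0 p (xi j) (hxq j)).
    rewrite /= (qp_add0r p _) //.
    by case: (y \in s'); [exact: hxq | exact: isQp_zero].
  rewrite (hadd _ _ ejQ (trQ s')) /vadd.
  apply: inZ_add; last exact: IH.
  rewrite hej (hsc _ _ (isZp_of (xi j) (hxq j) (hz j)) (QpX_delta j)) /vscale.
  exact: (inZ_mul p (xi j) _ n p0 (hxq j) (Zp0 p (xi j) (hz j)) (hcol j)).
have -> : xi = vadd p X (tr s) rest.
  apply: funext => y; rewrite /vadd /tr /rest; case: (y \in s).
  - by rewrite (qp_addr0 p (xi y) (hxq y)).
  - by rewrite (qp_add0r p (xi y) (hxq y)).
rewrite (hadd _ _ (trQ s) restQ) /vadd; apply: inZ_add.
- exact: htr.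
- exact: hrest.
Qed.
Lemma colQ j i : isQp p (A (delta p X j) i).
Proof. by case: hB => hQ _ _ _; have [h _] := hQ _ (QpX_delta j); exact: h. Qed.

Lemma colF j : finite_set [set i | 1 < padic_abs R p (A (delta p X j) i)].
Proof. by case: hB => hQ _ _ _; have [_ h] := hQ _ (QpX_delta j); exact: h. Qed.

Lemma delta_in0 j y : in_pnZp p (delta p X j y) 0.
Proof.
rewrite /delta; case: (y == j); last exact: inZ_zero.
by rewrite /in_pnZp /= qp_one_val.
Qed.

Lemma offF : exists F : set X, finite_set F /\
  forall j, ~ F j -> forall i, in_pnZp p (A (delta p X j) i) 0.
Proof.
have hz : B0 zv by split; [exact: QpX_zv | move=> i; exact: inZ_zero].
have [F [fF [e [e0 he]]]] := cont0 B0 B0_open hz.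
exists F; split; first exact: fF.
move=> j nFj i.
have [k hk] := exists_small R p e p1 e0.
have hsl : slab R p X set0 (delta p X j).
  split => y; first by have [h _] := QpX_delta j; exact: h.
  move=> _; exact: (abs_le1 _ (delta_in0 j y)).
have hF : forall y, F y -> padic_abs R p (delta p X j y) < e.
  move=> y Fy; rewrite /delta; case: eqP => [eyj|_].
    by move: Fy; rewrite eyj => /nFj.
  exact: (le_lt_trans (abs_le R p _ k p0 (inZ_zero p k)) hk).
have [_ [_ h]] := he _ hsl hF.
exact: h.
Qed.

Definition Ent (ij : X * X) : qp p := A (delta p X ij.2) ij.1.

Lemma maxE : exists ij : X * X, forall ij' : X * X,
  padic_abs R p (Ent ij') <= padic_abs R p (Ent ij).
Proof.
have [F [fF hF]] := offF.
have [s hs] := (finite_seqP F).1 fF.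
pose S := [set ij : X * X | ij.2 \in s /\ 1 < padic_abs R p (Ent ij)].
have fS : finite_set S.
  suff H : forall s' : seq X, finite_set [set ij : X * X | ij.2 \in s' /\ 1 < padic_abs R p (Ent ij)].
    exact: H.
  elim => [|j s' IH].
    have -> : [set ij : X * X | ij.2 \in [::] /\ 1 < padic_abs R p (Ent ij)] = set0.
      by apply/seteqP; split => -[a b] //= [].
    exact: finite_set0.
  apply: (@sub_finite_set _ _
     (([set i | 1 < padic_abs R p (A (delta p X j) i)] `*` [set j]) `|`
      [set ij : X * X | ij.2 \in s' /\ 1 < padic_abs R p (Ent ij)])).
    move=> [a b] /= []; rewrite in_cons => /orP[/eqP ->|bs] h.
      by left.
    by right.
  rewrite finite_setU; split; last exact: IH.
  apply: finite_setX; [exact: colF | exact: finite_set1].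
have inS : forall ij, ~ in_pnZp p (Ent ij) 0 -> S ij.
  move=> ij h; split.
    have Fj : F ij.2 by apply: contrapT => nF; apply: h; exact: hF.
    by move: Fj; rewrite hs.
  rewrite ltNge; apply/negP => h1; apply: h; exact: (le1_in _ (colQ _ _) h1).
have [[ij hij]|hall] := pselect (exists ij : X * X, ~ in_pnZp p (Ent ij) 0).
  have [L hL] := (finite_seqP S).1 fS.
  have ijL : ij \in L by have := inS ij hij; rewrite hL.
  have [y yL hy] := argmax_seq R _ L (fun ij => padic_abs R p (Ent ij)) ij ijL.
  exists y => ij'.
  have Sy : S y by rewrite hL.
  have [h|h] := pselect (in_pnZp p (Ent ij') 0).
    exact: (le_trans (abs_le1 _ h) (ltW Sy.2)).
  apply: hy; have := inS ij' h; by rewrite hL.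
have hall0 : forall ij, in_pnZp p (Ent ij) 0.
  by move=> ij; apply: contrapT => h; apply: hall; exists ij.
have [hex|hno] := pselect (exists m : nat, exists ij : X * X, ~ in_pnZp p (Ent ij) m).
  pose P := fun m : nat => `[< exists ij : X * X, ~ in_pnZp p (Ent ij) m >].
  have exP : exists m, P m by have [m hm] := hex; exists m; apply/asboolP.
  case: (ex_minnP exP) => m Pm minm.
  have [ij hij] : exists ij : X * X, ~ in_pnZp p (Ent ij) m by apply/asboolP.
  exists ij => ij'.
  apply: (abs_mono R p _ _ pp (colQ _ _)) => n hn.
  have nm : n < m%:Z.
    rewrite ltNge; apply/negP => mn; apply: hij.
    exact: (inZ_down p _ n m%:Z p0 (colQ _ _) hn mn).
  case: n hn nm => k hn nm.
    apply: contrapT => hk.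
    have : (m <= k)%N by apply: minm; apply/asboolP; exists ij'.
    by rewrite leqNgt -ltz_nat nm.
  exact: (inZ_down p _ 0 (Negz k) p0 (colQ _ _) (hall0 ij') erefl).
exists (x0, x0) => ij'.
apply: (abs_mono R p _ _ pp (colQ _ _)) => n hn.
case: n hn => k hn.
  by apply: contrapT => hk; apply: hno; exists k; exists ij'.
exact: (inZ_down p _ 0 (Negz k) p0 (colQ _ _) (hall0 ij') erefl).
Qed.
Lemma main_sec : exists i j : X,
    (forall i' j' : X, padic_abs R p (mxentry p X A i' j') <= padic_abs R p (mxentry p X A i j)) /\
    opnorm R p X A = (padic_abs R p (mxentry p X A i j))%:E.
Proof.
have [[i j] hmax] := maxE.
exists i, j.
have hm : forall i' j', padic_abs R p (mxentry p X A i' j') <= padic_abs R p (mxentry p X A i j).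
  by move=> i' j'; exact: (hmax (i', j')).
split; first exact: hm.
case: hB => hQ hadd hsc hc.
apply/eqP; rewrite eq_le; apply/andP; split.
- apply: ge_ereal_sup => _ [xi [hxi hn] <-]; rewrite lee_fin.
  have hxz : forall j', in_pnZp p (xi j') 0.
    move=> j'; apply: le1_in; first by case: hxi.
    apply: le_trans hn.
    apply: (ub_le_sup (QpX_bounded R p X xi hxi)).
    by exists j'.
  rewrite /vnorm; apply: ge_sup; first by exists (padic_abs R p (A xi x0)); exists x0.
  move=> _ [i' _ <-].
  apply: (abs_mono R p _ _ pp (colQ j i)) => n hnn.
  apply: core => // j'.
  apply: (abs_leP R p _ n pp (colQ j' i')).
  exact: (le_trans (hm i' j') (abs_le R p _ n p0 hnn)).
- have hd : [set (vnorm R p X (A xi))%:E | xi in [set xi | QpX R p X xi /\ vnorm R p X xi <= 1]]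
      (vnorm R p X (A (delta p X j)))%:E.
    exists (delta p X j) => //; split; first exact: QpX_delta.
    rewrite /vnorm; apply: ge_sup; first by exists (padic_abs R p (delta p X j x0)); exists x0.
    move=> _ [y _ <-]; exact: (abs_le1 _ (delta_in0 j y)).
  apply: le_trans (ereal_sup_ubound hd); rewrite lee_fin.
  rewrite /vnorm; apply: ub_le_sup; last by exists i.
  by exists (padic_abs R p (mxentry p X A i j)) => _ [y _ <-]; exact: hm.
Qed.
End Main.

Theorem lemma2p27 (R : realType) (p : nat) (X : countType) (x0 : X)
  (A : (X -> qp p) -> (X -> qp p)) :
  prime p -> isB R p X A ->
  exists i j : X,
    (forall i' j' : X, padic_abs R p (mxentry p X A i' j') <= padic_abs R p (mxentry p X A i j)) /\
    opnorm R p X A = (padic_abs R p (mxentry p X A i j))%:E.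
Proof.
move=> pp hB; exact: (@main_sec R p X x0 A pp hB).
Qed.
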